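(* Let $\mathcal{R}$ be a left-linear TRS, $t$ a partial term in $\mathcal{R}$, and $U$ a set of pairwise non-conflicting redex occurrences in $t$. Then $U$ has a complete development in $t$.
   Context: Partial terms are terms over $\Sigma_\bot=\Sigma\uplus\{\bot\}$ ordered by $\le_\bot$ (replacing subterms by $\bot$), a complete semilattice; $\liminf_{\iota\to\alpha}a_\iota=\bigvee_{\beta<\alpha}\bigwedge_{\beta\le\iota<\alpha}a_\iota$. A reduction $(t_\iota\to_{\pi_\iota}t_{\iota+1})_{\iota<\alpha}$ with contexts $c_\iota$ ($t_\iota$ with position $\pi_\iota$ replaced by $\bot$) strongly $p$-converges to $t$ if $\liminf_{\iota\to\lambda}c_\iota=t_\lambda$ for limits $\lambda<\alpha$ and $t$ is the last term (closed) or $t=\liminf_{\iota\to\alpha}c_\iota$ (open). Two distinct redex occurrences $u,v$ are conflicting if $v=u\cdot\pi$ with $\pi$ a pattern (function-symbol) position of the redex at $u$, or vice versa. Descendants $U/S$ of non-$\bot$ positions: identity for the empty reduction; for a step at $\pi$ with $l\to r$, $u$ is kept if $\pi\not\le u$, deleted if it lies in the pattern, and copied to $\pi\cdot w'\cdot x$ for all $w'$ with $r|_{w'}=l|_w$ if $u=\pi\cdot w\cdot x$ with $l|_w$ a variable; composed at successors; at a limit $\alpha$, $u\in U/S$ iff $u$ is a non-$\bot$ position of the final term and $u\in U/(S|_\iota)$ for all $\iota$ from some $\beta<\alpha$ on. A development of $U$ is a strongly $p$-converging reduction whose $\iota$-th step contracts a redex at a position in $U/(S|_\iota)$; it is complete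 if $U/S=\emptyset$. *)

(* Defs.v *)
From Stdlib Require Import List Arith.
Import ListNotations.
Set Implicit Arguments.

Section Terms.
Variables (F V : Type) (arity : F -> nat).

Inductive sym : Type := SFun (f : F) | SVar (x : V) | SBot.

(* a (possibly infinite) partial term: the partial map position |-> symbol;
   positions are root-to-leaf lists of argument indices *)
Definition term := list nat -> option sym.

Definition wf (t : term) : Prop :=
  t [] <> None /\
  forall p i, t (p ++ [i]) <> None <-> exists f, t p = Some (SFun f) /\ i < arity f.

Definition total (t : term) : Prop := forall p, t p <> Some SBot.
Definition finite_term (t : term) : Prop :=
  exists n, forall p, t p <> None -> length p <= n.
Definition var_of (t : term) (x : V) : Prop := exists p, t p = Some (SVar x).
Definition linear (t : term) : Prop :=
  forall p q x, t p = Some (SVar x) -> t q = Some (SVar x) -> p = q.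

Record rule := Rule { lhs : term; rhs : term }.

Definition is_trs (R : rule -> Prop) : Prop :=
  forall rho, R rho ->
    wf (lhs rho) /\ wf (rhs rho) /\ total (lhs rho) /\ total (rhs rho) /\
    finite_term (lhs rho) /\ (exists f, lhs rho [] = Some (SFun f)) /\
    (forall x, var_of (rhs rho) x -> var_of (lhs rho) x).

Definition left_linear_trs (R : rule -> Prop) : Prop :=
  is_trs R /\ forall rho, R rho -> linear (lhs rho).

Definition subterm (t : term) (u : list nat) : term := fun p => t (u ++ p).

Definition is_prefix (u p : list nat) : Prop := exists w, p = u ++ w.

Definition replace (t : term) (u : list nat) (s : term) : term :=
  fun p => if list_eq_dec Nat.eq_dec (firstn (length u) p) u
           then s (skipn (length u) p) else t p.

Definition botterm : term := fun p => match p with [] => Some SBot | _ => None end.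

Fixpoint substf (sigma : V -> term) (l : term) (w p : list nat) : option sym :=
  match l w with
  | Some (SVar x) => sigma x p
  | _ => match p with
         | [] => l w
         | i :: p' => substf sigma l (w ++ [i]) p'
         end
  end.
Definition subst (sigma : V -> term) (l : term) : term := substf sigma l [].

Definition rstep (R : rule -> Prop) (s : term) (pi : list nat) (rho : rule) (s' : term) : Prop :=
  R rho /\ exists sigma : V -> term,
    subterm s pi = subst sigma (lhs rho) /\ s' = replace s pi (subst sigma (rhs rho)).

Definition redex_at (R : rule -> Prop) (t : term) (u : list nat) (rho : rule) : Prop :=
  R rho /\ exists sigma, subterm t u = subst sigma (lhs rho).
Definition redex_occ (R : rule -> Prop) (t : term) (u : list nat) : Prop :=
  exists rho, redex_at R t u rho.

Definition pattern_pos (rho : rule) (w : list nat) : Prop :=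
  exists f, lhs rho w = Some (SFun f).

Definition conflicting (R : rule -> Prop) (t : term) (u v : list nat) : Prop :=
  u <> v /\
  ((exists pi rho, v = u ++ pi /\ redex_at R t u rho /\ pattern_pos rho pi) \/
   (exists pi rho, u = v ++ pi /\ redex_at R t v rho /\ pattern_pos rho pi)).

Definition le_bot (s t : term) : Prop :=
  forall p x, s p = Some x -> x <> SBot -> t p = Some x.

Definition is_glb (P : term -> Prop) (g : term) : Prop :=
  wf g /\ (forall s, P s -> le_bot g s) /\
  (forall h, wf h -> (forall s, P s -> le_bot h s) -> le_bot h g).
Definition is_lub (P : term -> Prop) (g : term) : Prop :=
  wf g /\ (forall s, P s -> le_bot s g) /\
  (forall h, wf h -> (forall s, P s -> le_bot s h) -> le_bot g h).

Definition nonbot_pos (t : term) (u : list nat) : Prop :=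
  exists x, t u = Some x /\ x <> SBot.

Definition pset := list nat -> Prop.
Definition pseteq (A B : pset) : Prop := forall u, A u <-> B u.

Definition desc_step (rho : rule) (pi : list nat) (U : pset) : pset :=
  fun v => exists u, U u /\
    ((~ is_prefix pi u /\ v = u) \/
     (exists w x y w', u = pi ++ w ++ x /\ lhs rho w = Some (SVar y) /\
                       rhs rho w' = Some (SVar y) /\ v = pi ++ w' ++ x)).

(* transfinite reductions: the steps are indexed by a well-ordered type
   (the ordinals iota < alpha); [fin] is the term t_alpha. *)
Record reduction := Reduction {
  idx : Type;
  ilt : idx -> idx -> Prop;
  tm : idx -> term;
  pos : idx -> list nat;
  rl : idx -> rule;
  fin : term
}.

Definition well_order (A : Type) (lt : A -> A -> Prop) : Prop :=
  (forall a, ~ lt a a) /\ (forall a b c, lt a b -> lt b c -> lt a c) /\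
  (forall a b, lt a b \/ a = b \/ lt b a) /\ well_founded lt.

Section Red.
Variable S : reduction.
Let A := idx S.
Let lt := ilt S.

Definition succ_of (i j : A) : Prop := lt i j /\ forall k, lt i k -> j = k \/ lt j k.
Definition is_min (i : A) : Prop := forall k, ~ lt k i.
Definition is_max (i : A) : Prop := forall k, ~ lt i k.
Definition is_limit (l : A) : Prop := ~ is_min l /\ ~ exists i, succ_of i l.
Definition open_red : Prop := (exists a : A, True) /\ ~ exists m, is_max m.
Definition empty_red : Prop := forall a : A, False.

Definition ctx (i : A) : term := replace (tm S i) (pos S i) botterm.

(* liminf_{iota -> lambda} c_iota, where B is the index set {iota < lambda} *)
Definition is_liminf (B : A -> Prop) (t : term) : Prop :=
  exists g : A -> term,
    (forall b, B b -> is_glb (fun s => exists i, B i /\ (b = i \/ lt b i) /\ s = ctx i) (g b)) /\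
    is_lub (fun s => exists b, B b /\ s = g b) t.

Definition sp_converging (R : rule -> Prop) (s : term) : Prop :=
  well_order lt /\
  (forall i, wf (tm S i)) /\ wf (fin S) /\
  (forall i, is_min i -> tm S i = s) /\ (empty_red -> fin S = s) /\
  (forall i j, succ_of i j -> rstep R (tm S i) (pos S i) (rl S i) (tm S j)) /\
  (forall i, is_max i -> rstep R (tm S i) (pos S i) (rl S i) (fin S)) /\
  (forall l, is_limit l -> is_liminf (fun i => lt i l) (tm S l)) /\
  (open_red -> is_liminf (fun _ => True) (fin S)).

(* D i = U/(S|_i) and Dfin = U/S *)
Definition lim_desc (D : A -> pset) (B : A -> Prop) (t : term) : pset :=
  fun u => nonbot_pos t u /\
           exists b, B b /\ forall i, B i -> (b = i \/ lt b i) -> D i u.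

Definition is_descendants (U : pset) (D : A -> pset) (Dfin : pset) : Prop :=
  (forall i, is_min i -> pseteq (D i) U) /\ (empty_red -> pseteq Dfin U) /\
  (forall i j, succ_of i j -> pseteq (D j) (desc_step (rl S i) (pos S i) (D i))) /\
  (forall i, is_max i -> pseteq Dfin (desc_step (rl S i) (pos S i) (D i))) /\
  (forall l, is_limit l -> pseteq (D l) (lim_desc D (fun i => lt i l) (tm S l))) /\
  (open_red -> pseteq Dfin (lim_desc D (fun _ => True) (fin S))).

Definition complete_development (R : rule -> Prop) (t : term) (U : pset) : Prop :=
  sp_converging R t /\
  exists (D : A -> pset) (Dfin : pset),
    is_descendants U D Dfin /\
    (forall i, D i (pos S i)) /\
    (forall u, ~ Dfin u).
End Red.
End Terms.

(* Main.v *)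
Require Import Defs.
From Stdlib Require Import List Arith Lia Classical ClassicalEpsilon FunctionalExtensionality.
Import ListNotations.

Local Arguments SFun {F V} f.
Local Arguments SVar {F V} x.
Local Arguments SBot {F V}.
Local Arguments botterm {F V}.

Section Basic.
Context {F V : Type} {arity : F -> nat}.
Notation term := (term F V).
Notation wf := (wf arity).

Lemma firstn_len_app (u w : list nat) : firstn (length u) (u ++ w) = u.
Proof. rewrite firstn_app, Nat.sub_diag, firstn_all. simpl. apply app_nil_r. Qed.

Lemma replace_in (t s : term) u w : replace t u s (u ++ w) = s w.
Proof.
  unfold replace. rewrite firstn_len_app. destruct (list_eq_dec Nat.eq_dec u u); [|congruence].
  rewrite skipn_app, Nat.sub_diag, skipn_all. reflexivity.
Qed.

Lemma replace_out (t s : term) u p : ~ is_prefix u p -> replace t u s p = t p.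
Proof.
  intro H. unfold replace. destruct (list_eq_dec Nat.eq_dec _ u) as [e|]; [|reflexivity].
  exfalso. apply H. exists (skipn (length u) p). rewrite <- e at 1. symmetry. apply firstn_skipn.
Qed.

Lemma prefix_snoc (pi p : list nat) i : is_prefix pi (p ++ [i]) -> pi = p ++ [i] \/ is_prefix pi p.
Proof.
  intros [w Hw]. destruct w as [|a w] using rev_ind.
  - left. rewrite app_nil_r in Hw. auto.
  - right. exists w. rewrite app_assoc in Hw. apply app_inj_tail in Hw. destruct Hw; auto.
Qed.

Lemma prefix_cases (u a pi b : list nat) : u ++ a = pi ++ b -> is_prefix pi u \/ is_prefix u pi.
Proof.
  intro H. apply app_eq_app in H. destruct H as [l [[H1 _]|[H1 _]]].
  - left. exists l. auto.
  - right. exists l. auto.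
Qed.

Lemma replace_sub (t s : term) u q p : replace t (u ++ q) s (u ++ p) = replace (subterm t u) q s p.
Proof.
  destruct (classic (is_prefix q p)) as [[w ->]|Hn].
  - rewrite app_assoc, !replace_in. reflexivity.
  - rewrite !replace_out; auto. intros [w Hw]. apply Hn. exists w.
    rewrite <- app_assoc in Hw. apply app_inv_head in Hw. auto.
Qed.

Lemma wf_prefix (t : term) : wf t -> forall q p, t (p ++ q) <> None -> t p <> None.
Proof.
  intros [_ Hw] q. induction q as [|a q IH] using rev_ind; intros p H.
  - rewrite app_nil_r in H. auto.
  - apply IH. rewrite app_assoc in H. apply Hw in H. destruct H as [f [Hf _]]. congruence.
Qed.

Lemma wf_parent (t : term) : wf t -> forall p a q, t (p ++ a :: q) <> None ->
  exists f, t p = Some (SFun f) /\ a < arity f.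
Proof.
  intros Hw p a q H. assert (H' : t (p ++ [a]) <> None).
  { apply (wf_prefix _ Hw q). rewrite <- app_assoc. auto. }
  apply (proj2 Hw) in H'. auto.
Qed.

Lemma wf_var_leaf (t : term) x w q : wf t -> t w = Some (SVar x) -> t (w ++ q) <> None -> q = [].
Proof.
  intros Hw H1 H2. destruct q as [|a q]; auto. apply wf_parent in H2; auto.
  destruct H2 as [f [Hf _]]. congruence.
Qed.

Lemma wf_var_notfun (t : term) x w q f : wf t -> t w = Some (SVar x) -> t (w ++ q) <> Some (SFun f).
Proof.
  intros Hw H1 H2. assert (q = []) by (apply (wf_var_leaf _ _ _ _ Hw H1); congruence). subst.
  rewrite app_nil_r in H2. congruence.
Qed.

Lemma subterm_wf (t : term) u : wf t -> t u <> None -> wf (subterm t u).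
Proof.
  intros [H0 Hw] Hu. split.
  - unfold subterm. rewrite app_nil_r. auto.
  - intros p i. unfold subterm. rewrite app_assoc. apply Hw.
Qed.

Definition notvar (o : option (sym F V)) := forall x, o <> Some (SVar x).

Lemma substf_cases (l : term) : forall p w,
  (exists w1 q1 x, p = w1 ++ q1 /\ l (w ++ w1) = Some (SVar x) /\
      forall sigma, substf sigma l w p = sigma x q1) \/
  ((forall w1 q1, p = w1 ++ q1 -> notvar (l (w ++ w1))) /\
      forall sigma, substf sigma l w p = l (w ++ p)).
Proof.
  induction p as [|a p IH]; intro w.
  - destruct (l w) as [[f|x|]|] eqn:E.
    + right. split. * intros w1 q1 H. symmetry in H. apply app_eq_nil in H. destruct H; subst.
        rewrite app_nil_r, E. intros y; congruence.
      * intro sigma. simpl. rewrite E, app_nil_r. auto.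
    + left. exists [], [], x. split; [reflexivity|]. split; [rewrite app_nil_r; exact E|].
      intro sigma. simpl. rewrite E. auto.
    + right. split. * intros w1 q1 H. symmetry in H. apply app_eq_nil in H. destruct H; subst.
        rewrite app_nil_r, E. intros y; congruence.
      * intro sigma. simpl. rewrite E, app_nil_r. auto.
    + right. split. * intros w1 q1 H. symmetry in H. apply app_eq_nil in H. destruct H; subst.
        rewrite app_nil_r, E. intros y; congruence.
      * intro sigma. simpl. rewrite E, app_nil_r. auto.
  - destruct (classic (notvar (l w))) as [Hnv|Hv].
    + assert (Hst : forall sigma, substf sigma l w (a :: p) = substf sigma l (w ++ [a]) p).
      { intro sigma. simpl. destruct (l w) as [[f|x|]|] eqn:E; auto. exfalso. apply (Hnv x). auto. }
      destruct (IH (w ++ [a])) as [[w1 [q1 [x [H1 [H2 H3]]]]]|[H1 H2]].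
      * left. exists (a :: w1), q1, x. subst. split; [reflexivity|]. split.
        -- rewrite <- app_assoc in H2. auto.
        -- intro sigma. rewrite Hst. auto.
      * right. split.
        -- intros w1 q1 H. destruct w1 as [|b w1].
           ++ rewrite app_nil_r. auto.
           ++ injection H as <- H. specialize (H1 _ _ H). rewrite <- app_assoc in H1. auto.
        -- intro sigma. rewrite Hst, H2, <- app_assoc. auto.
    + unfold notvar in Hv. apply not_all_ex_not in Hv. destruct Hv as [x Hx]. apply NNPP in Hx.
      left. exists [], (a :: p), x. split; [reflexivity|]. split; [rewrite app_nil_r; exact Hx|].
      intro sigma. simpl. rewrite Hx. auto.
Qed.

Lemma subst_cases (l : term) p :
  (exists w1 q1 x, p = w1 ++ q1 /\ l w1 = Some (SVar x) /\
      forall sigma, subst sigma l p = sigma x q1) \/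
  ((forall w1 q1, p = w1 ++ q1 -> notvar (l w1)) /\
      forall sigma, subst sigma l p = l p).
Proof. apply (substf_cases l p []). Qed.

Lemma subst_var (l : term) sigma w x q : wf l -> l w = Some (SVar x) -> subst sigma l (w ++ q) = sigma x q.
Proof.
  intros Hw Hx. destruct (subst_cases l (w ++ q)) as [[w1 [q1 [y [H1 [H2 H3]]]]]|[H1 H2]].
  - rewrite H3. apply app_eq_app in H1. destruct H1 as [m [[-> ->]|[-> ->]]].
    + assert (m = []) by (apply (wf_var_leaf _ _ _ _ Hw H2); congruence). subst.
      rewrite app_nil_r in Hx. rewrite Hx in H2. injection H2 as ->. auto.
    + assert (m = []) by (apply (wf_var_leaf _ _ _ _ Hw Hx); congruence). subst.
      rewrite app_nil_r in H2. rewrite Hx in H2. injection H2 as ->. auto.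
  - exfalso. apply (H1 w q eq_refl x). auto.
Qed.

Lemma subst_fun (l : term) sigma p f : wf l -> l p = Some (SFun f) -> subst sigma l p = Some (SFun f).
Proof.
  intros Hw Hf. destruct (subst_cases l p) as [[w1 [q1 [y [H1 [H2 H3]]]]]|[H1 H2]].
  - subst. exfalso. apply (wf_var_notfun _ _ _ q1 f Hw H2). auto.
  - rewrite H2. auto.
Qed.

Lemma subst_wf (r : term) sigma : wf r -> (forall y, var_of r y -> wf (sigma y)) -> wf (subst sigma r).
Proof.
  intros Hr Hs. split.
  - destruct (subst_cases r []) as [[w1 [q1 [y [H1 [H2 H3]]]]]|[H1 H2]].
    + symmetry in H1. apply app_eq_nil in H1. destruct H1; subst. rewrite H3.
      apply Hs. exists []. auto.
    + rewrite H2. apply Hr.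
  - intros p i. destruct (subst_cases r p) as [[w1 [q1 [y [H1 [H2 H3]]]]]|[H1 H2]].
    + subst. rewrite <- app_assoc, !subst_var with (x := y); auto.
      apply Hs. exists w1. auto.
    + rewrite H2. destruct (subst_cases r (p ++ [i])) as [[w1 [q1 [y [H4 [H5 H6]]]]]|[H4 H5]].
      * destruct q1 as [|b q1] using rev_ind.
        -- rewrite app_nil_r in H4. subst w1. rewrite H6. split.
           ++ intros _. apply (proj2 Hr). congruence.
           ++ intros _. apply Hs. exists (p ++ [i]). auto.
        -- rewrite app_assoc in H4. apply app_inj_tail in H4. destruct H4 as [H4 _].
           exfalso. apply (H1 w1 q1 H4 y). auto.
      * rewrite H5. apply Hr.
Qed.

Lemma replace_wf (t s : term) pi : wf t -> t pi <> None -> wf s -> wf (replace t pi s).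
Proof.
  intros Ht Hpi Hs. split.
  - destruct pi as [|a pi].
    + pose proof (replace_in t s [] []) as E; simpl in E; rewrite E. apply Hs.
    + rewrite replace_out. apply Ht. intros [w Hw]. discriminate.
  - intros p i. destruct (classic (is_prefix pi p)) as [[w ->]|Hn].
    + rewrite <- app_assoc, !replace_in. apply Hs.
    + rewrite (replace_out _ _ _ _ Hn). destruct (classic (is_prefix pi (p ++ [i]))) as [Hp|Hp].
      * destruct (prefix_snoc _ _ _ Hp) as [->|]; [|contradiction].
        pose proof (replace_in t s (p ++ [i]) []) as E; rewrite app_nil_r in E; rewrite E. split.
        -- intros _. apply (proj2 Ht). auto.
        -- intros _. apply Hs.
      * rewrite replace_out; auto. apply Ht.
Qed.

End Basic.

Section Step.
Context {F V : Type} {arity : F -> nat} {R : rule F V -> Prop}.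
Hypothesis HR : left_linear_trs arity R.
Notation term := (term F V).
Notation wf := (wf arity).

Definition Inv (t : term) (D : pset) : Prop :=
  forall u, D u -> exists rho, redex_at R t u rho /\
    forall pi, pi <> [] -> D (u ++ pi) -> ~ pattern_pos rho pi.

Lemma rule_facts rho : R rho ->
  wf (lhs rho) /\ wf (rhs rho) /\ total (lhs rho) /\
  (exists f, lhs rho [] = Some (SFun f)) /\
  (forall x, var_of (rhs rho) x -> var_of (lhs rho) x) /\ linear (lhs rho).
Proof.
  intro H. destruct HR as [Ht Hl]. destruct (Ht rho H) as [H1 [H2 [H3 [H4 [H5 [H6 H7]]]]]].
  exact (conj H1 (conj H2 (conj H3 (conj H6 (conj H7 (Hl rho H)))))).
Qed.

Lemma redex_root (t : term) u rho sigma : R rho -> subterm t u = subst sigma (lhs rho) ->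
  exists f, t u = Some (SFun f).
Proof.
  intros H Hs. destruct (rule_facts _ H) as [Hl [_ [_ [[f Hf] _]]]]. exists f.
  assert (E : subterm t u [] = subst sigma (lhs rho) []) by (rewrite Hs; auto).
  unfold subterm in E. rewrite app_nil_r in E. rewrite E. eapply subst_fun; eauto.
Qed.

Lemma subst_sub_var (t : term) u l sigma w y : wf l -> subterm t u = subst sigma l ->
  l w = Some (SVar y) -> sigma y = subterm t (u ++ w).
Proof.
  intros Hl Hs Hw. extensionality q. unfold subterm.
  rewrite <- app_assoc. change (t (u ++ w ++ q)) with (subterm t u (w ++ q)).
  rewrite Hs. symmetry. eapply subst_var; eauto.
Qed.

Lemma step_wf (t : term) pi rho sigma : wf t -> R rho -> subterm t pi = subst sigma (lhs rho) ->
  wf (replace t pi (subst sigma (rhs rho))).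
Proof.
  intros Ht H Hs. destruct (rule_facts _ H) as [Hl [Hr [Htot [[f Hf] [Hv Hlin]]]]].
  apply replace_wf; auto.
  - destruct (redex_root _ _ _ _ H Hs) as [g Hg]. congruence.
  - apply subst_wf; auto. intros y Hy. apply Hv in Hy. destruct Hy as [w Hw].
    rewrite (subst_sub_var _ _ _ _ _ _ Hl Hs Hw). apply subterm_wf; auto.
    destruct w as [|k w0] using rev_ind; [congruence|].
    assert (Hn : lhs rho (w0 ++ [k]) <> None) by congruence.
    apply (proj2 Hl) in Hn. destruct Hn as [g [Hg Hk]].
    assert (E : subterm t pi w0 = Some (SFun g)) by (rewrite Hs; eapply subst_fun; eauto).
    unfold subterm in E. rewrite app_assoc. apply (proj2 Ht). exists g; auto.
Qed.

Lemma var_below (t : term) u rho sigma q : R rho -> subterm t u = subst sigma (lhs rho) ->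
  t (u ++ q) <> None -> ~ pattern_pos rho q ->
  exists wq rq y, q = wq ++ rq /\ lhs rho wq = Some (SVar y).
Proof.
  intros H Hs Hq Hp. destruct (rule_facts _ H) as [Hl [Hr [Htot [[f Hf] [Hv Hlin]]]]].
  destruct (subst_cases (lhs rho) q) as [[w1 [q1 [y [H1 [H2 H3]]]]]|[H1 H2]].
  - exists w1, q1, y. auto.
  - assert (E : subterm t u q = lhs rho q) by (rewrite Hs; apply H2). unfold subterm in E.
    rewrite E in Hq. destruct (lhs rho q) as [[g|y|]|] eqn:Eq.
    + exfalso. apply Hp. exists g. auto.
    + exists q, [], y. rewrite app_nil_r. auto.
    + exfalso. apply (Htot q). auto.
    + congruence.
Qed.

Lemma L1 (t s : term) u l sigma wq rq y : wf l -> linear l ->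
  subterm t u = subst sigma l -> l wq = Some (SVar y) ->
  exists sigma', subterm (replace t (u ++ wq ++ rq) s) u = subst sigma' l.
Proof.
  intros Hl Hlin Hs Hy.
  exists (fun z => if excluded_middle_informative (z = y) then replace (sigma y) rq s else sigma z).
  extensionality p. unfold subterm at 1. rewrite replace_sub, Hs.
  destruct (subst_cases l p) as [[w1 [q1 [x [H1 [H2 H3]]]]]|[H1 H2]].
  - rewrite H3. destruct (excluded_middle_informative (x = y)) as [->|Hxy].
    + assert (w1 = wq) by (apply (Hlin w1 wq y); auto). subst.
      rewrite replace_sub. f_equal. extensionality m. unfold subterm. eapply subst_var; eauto.
    + rewrite replace_out. { subst p. eapply subst_var; eauto. }
      intros [m Hm]. subst p. rewrite <- app_assoc in Hm. apply app_eq_app in Hm.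
      destruct Hm as [k [[-> _]|[-> _]]].
      * assert (Hk : l (wq ++ k) <> None) by congruence.
        pose proof (wf_var_leaf _ _ _ _ Hl Hy Hk). subst.
        rewrite app_nil_r in H2. congruence.
      * assert (Hk : l (w1 ++ k) <> None) by congruence.
        pose proof (wf_var_leaf _ _ _ _ Hl H2 Hk). subst.
        rewrite app_nil_r in Hy. congruence.
  - rewrite H2. rewrite replace_out. { apply H2. }
    intros [m Hm]. apply (H1 wq (rq ++ m) ltac:(rewrite Hm, app_assoc; reflexivity) y). exact Hy.
Qed.

Lemma L2 (t s : term) pi u : ~ is_prefix pi u -> ~ is_prefix u pi ->
  subterm (replace t pi s) u = subterm t u.
Proof.
  intros H1 H2. extensionality p. unfold subterm. apply replace_out.
  intros [w Hw]. destruct (prefix_cases u p pi w Hw); auto.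
Qed.

Lemma L3 (t : term) pi l r sigma ww x w' y : wf l -> wf r ->
  subterm t pi = subst sigma l -> l ww = Some (SVar y) -> r w' = Some (SVar y) ->
  subterm (replace t pi (subst sigma r)) (pi ++ w' ++ x) = subterm t (pi ++ ww ++ x).
Proof.
  intros Hl Hr Hs Hw Hw'. extensionality p. unfold subterm.
  rewrite <- !app_assoc, replace_in. rewrite (subst_var _ _ _ _ _ Hr Hw').
  change (t (pi ++ ww ++ x ++ p)) with (subterm t pi (ww ++ x ++ p)). rewrite Hs.
  symmetry. eapply subst_var; eauto.
Qed.


Lemma step_inv (t : term) D pi rho sigma :
  wf t -> Inv t D -> D pi -> R rho -> subterm t pi = subst sigma (lhs rho) ->
  Inv (replace t pi (subst sigma (rhs rho))) (desc_step rho pi D).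
Proof.
  intros Ht HI Dpi HRr Hs v [u [Du Hc]].
  destruct (rule_facts _ HRr) as [Hl [Hr [Htot [[f Hf] [Hv Hlin]]]]].
  destruct (HI u Du) as [rho_u [[HRu [su Hsu]] Hncu]].
  destruct (rule_facts _ HRu) as [Hlu [Hru [Htotu [[fu Hfu] [Hvu Hlinu]]]]].
  destruct Hc as [[Hnp ->]|[ww [x [y [w' [-> [Hww [Hw' ->]]]]]]]].
  - destruct (classic (is_prefix u pi)) as [[q Hq]|Hnp2].
    + subst pi. assert (Hq0 : q <> []).
      { intro. subst. apply Hnp. exists []. rewrite !app_nil_r. reflexivity. }
      pose proof (Hncu q Hq0 Dpi) as Hnpat.
      destruct (redex_root _ _ _ _ HRr Hs) as [g Hg].
      assert (Hnone : t (u ++ q) <> None) by congruence.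
      destruct (var_below _ _ _ _ _ HRu Hsu Hnone Hnpat) as [wq [rq [yq [-> Hyq]]]].
      exists rho_u. split.
      * split; auto. eapply L1; eauto.
      * intros pi2 Hpi2 [z [Dz Hz]] [g2 Hpat].
        destruct Hz as [[Hnz Ez]|[ww2 [x2 [y2 [w2' [Ez [H1 [H2 Ev]]]]]]]].
        -- subst z. apply (Hncu pi2 Hpi2 Dz). exists g2. auto.
        -- rewrite <- !app_assoc in Ev. apply app_inv_head in Ev. subst pi2.
           apply (wf_var_notfun _ _ _ _ _ Hlu Hyq Hpat).
    + assert (Hst : subterm (replace t pi (subst sigma (rhs rho))) u = subterm t u) by (apply L2; auto).
      exists rho_u. split.
      * split; auto. exists su. rewrite Hst. auto.
      * intros pi2 Hpi2 [z [Dz Hz]] Hpat.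
        destruct Hz as [[Hnz Ez]|[ww2 [x2 [y2 [w2' [Ez [H1 [H2 Ev]]]]]]]].
        -- subst z. apply (Hncu pi2 Hpi2 Dz Hpat).
        -- destruct (prefix_cases _ _ _ _ Ev); auto.
  - exists rho_u. split.
    + split; auto. exists su. rewrite (L3 t pi (lhs rho) (rhs rho) sigma ww x w' y Hl Hr Hs Hww Hw'). auto.
    + intros pi2 Hpi2 [z [Dz Hz]] Hpat.
      destruct Hz as [[Hnz Ez]|[ww2 [x2 [y2 [w2' [Ez [H1 [H2 Ev]]]]]]]].
      * apply Hnz. exists (w' ++ x ++ pi2). rewrite <- Ez, <- !app_assoc. auto.
      * rewrite <- !app_assoc in Ev. apply app_inv_head in Ev.
        assert (Ew : w' = w2' /\ y = y2).
        { apply app_eq_app in Ev. destruct Ev as [k [[E1 _]|[E1 _]]].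
          - subst w'. assert (Hk : rhs rho (w2' ++ k) <> None) by congruence.
            pose proof (wf_var_leaf _ _ _ _ Hr H2 Hk). subst. rewrite app_nil_r in *. split; congruence.
          - subst w2'. assert (Hk : rhs rho (w' ++ k) <> None) by congruence.
            pose proof (wf_var_leaf _ _ _ _ Hr Hw' Hk). subst. rewrite app_nil_r in *. split; congruence. }
        destruct Ew as [<- <-]. apply app_inv_head in Ev. subst x2.
        assert (ww2 = ww) by (apply (Hlin ww2 ww y); auto). subst ww2.
        apply (Hncu pi2 Hpi2); auto. rewrite <- !app_assoc. congruence.
Qed.

End Step.

Section Lim.
Context {F V : Type} {arity : F -> nat}.
Notation term := (term F V).
Notation wf := (wf arity).

Definition Mk (St : list nat -> Prop) (val : term) : term := fun p =>
  if excluded_middle_informative (St p) then val p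
  else if excluded_middle_informative (exists p0 k f, p = p0 ++ [k] /\ St p0 /\ val p0 = Some (SFun f) /\ k < arity f)
  then Some SBot
  else match p with [] => Some SBot | _ => None end.

Lemma Mk_nonbot St val p x : Mk St val p = Some x -> x <> SBot -> St p /\ val p = Some x.
Proof.
  unfold Mk. destruct (excluded_middle_informative (St p)); auto.
  destruct (excluded_middle_informative _); [congruence|]. destruct p; congruence.
Qed.

Lemma Mk_St St val p : St p -> Mk St val p = val p.
Proof. intro H. unfold Mk. destruct (excluded_middle_informative (St p)); tauto. Qed.

Lemma Mk_wf St val :
  (forall p q, St (p ++ q) -> St p) -> (forall p, St p -> val p <> None) ->
  (forall p i, St (p ++ [i]) -> val (p ++ [i]) <> None -> exists f, val p = Some (SFun f) /\ i < arity f) ->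
  wf (Mk St val).
Proof.
  intros h1 h2 h3. split.
  - unfold Mk. destruct (excluded_middle_informative (St [])); auto.
    destruct (excluded_middle_informative _); congruence.
  - intros p i. split.
    + unfold Mk at 1. destruct (excluded_middle_informative (St (p ++ [i]))) as [Hs|Hs].
      * intro Hn. destruct (h3 p i Hs Hn) as [f [Hf Hi]]. exists f. split; auto.
        rewrite Mk_St; auto. apply (h1 _ _ Hs).
      * destruct (excluded_middle_informative _) as [[p0 [k [f [E [Hp0 [Hf Hk]]]]]]|Hn].
        -- intros _. apply app_inj_tail in E. destruct E; subst. exists f. rewrite Mk_St; auto.
        -- destruct (p ++ [i]) eqn:E; [destruct p; discriminate|]. congruence.
    + intros [f [Hf Hi]]. destruct (Mk_nonbot _ _ _ _ Hf ltac:(congruence)) as [Hp Hv].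
      unfold Mk. destruct (excluded_middle_informative (St (p ++ [i]))) as [Hs|Hs]; auto.
      destruct (excluded_middle_informative _) as [_|Hn]; [congruence|].
      exfalso. apply Hn. exists p, i, f. auto.
Qed.

Variable c : nat -> term.
Hypothesis Hc : forall i, wf (c i).

Definition stable b p := (forall q r i, p = q ++ r -> b <= i -> c i q = c b q) /\ c b p <> None.

Lemma stable_prefix b p q : stable b (p ++ q) -> stable b p.
Proof.
  intros [H1 H2]. split.
  - intros q0 r i E Hi. apply (H1 q0 (r ++ q) i); auto. subst. symmetry; apply app_assoc.
  - apply (wf_prefix _ (Hc b) q). auto.
Qed.

Lemma stable_val b p i : stable b p -> b <= i -> c i p = c b p.
Proof. intros [H1 _] Hi. apply (H1 p [] i); auto. rewrite app_nil_r; auto. Qed.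

Lemma stable_mono b b' p : stable b p -> b <= b' -> stable b' p.
Proof.
  intros [H1 H2] Hb. split.
  - intros q r i E Hi. rewrite (H1 q r i E); [|lia]. symmetry. apply (H1 q r b' E Hb).
  - rewrite (stable_val b p b'); auto. split; auto.
Qed.

Definition G b : term := Mk (stable b) (c b).

Lemma G_wf b : wf (G b).
Proof.
  apply Mk_wf.
  - apply stable_prefix.
  - intros p [_ H]. auto.
  - intros p i _ Hn. apply (Hc b). auto.
Qed.

Definition Lst p := exists b, stable b p.
Definition valL : term := fun p =>
  match excluded_middle_informative (Lst p) with
  | left H => c (proj1_sig (constructive_indefinite_description _ H)) p
  | right _ => None end.

Lemma valL_eq b p : stable b p -> valL p = c b p.
Proof.
  intro Hb. unfold valL. destruct (excluded_middle_informative (Lst p)) as [H|H].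
  - destruct (constructive_indefinite_description _ H) as [b0 Hb0]. simpl.
    rewrite <- (stable_val b0 p (max b b0)); [|auto|lia].
    apply stable_val; auto. lia.
  - exfalso. apply H. exists b. auto.
Qed.

Definition L : term := Mk Lst valL.

Lemma L_wf : wf L.
Proof.
  apply Mk_wf.
  - intros p q [b Hb]. exists b. apply (stable_prefix b p q). auto.
  - intros p [b Hb]. rewrite (valL_eq b); auto. apply Hb.
  - intros p i [b Hb] Hn. rewrite (valL_eq b) in Hn; auto.
    rewrite (valL_eq b p); [|apply (stable_prefix b p [i]); auto]. apply (Hc b). auto.
Qed.

Lemma G_glb b : is_glb arity (fun s => exists i, True /\ (b = i \/ b < i) /\ s = c i) (G b).
Proof.
  split; [apply G_wf|split].
  - intros s [i [_ [Hi ->]]] p x Hp Hx. destruct (Mk_nonbot _ _ _ _ Hp Hx) as [Hs Hv].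
    rewrite (stable_val b p i); auto. lia.
  - intros h Hh Hlow p x Hp Hx.
    assert (Hcb : c b p = Some x) by (apply (Hlow (c b)); [exists b; auto|auto|auto]).
    unfold G. rewrite Mk_St; auto. split; [|congruence].
    intros q r i E Hi. destruct r as [|a r].
    + rewrite app_nil_r in E. subst q. rewrite Hcb. apply (Hlow (c i)); auto.
      exists i. split; auto. split; auto. lia.
    + assert (Hn : h (q ++ a :: r) <> None) by congruence. rewrite <- E in Hn.
      rewrite E in Hn. destruct (wf_parent _ Hh q a r Hn) as [f [Hf _]].
      rewrite (Hlow (c i) ltac:(exists i; split; auto; split; auto; lia) q (SFun f) Hf ltac:(congruence)).
      rewrite (Hlow (c b) ltac:(exists b; auto) q (SFun f) Hf ltac:(congruence)). auto.
Qed.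

Lemma L_lub : is_lub arity (fun s => exists b, True /\ s = G b) L.
Proof.
  split; [apply L_wf|split].
  - intros s [b [_ ->]] p x Hp Hx. destruct (Mk_nonbot _ _ _ _ Hp Hx) as [Hs Hv].
    unfold L. rewrite Mk_St; [|exists b; auto]. rewrite (valL_eq b); auto.
  - intros h Hh Hup p x Hp Hx. destruct (Mk_nonbot _ _ _ _ Hp Hx) as [[b Hs] Hv].
    rewrite (valL_eq b) in Hv; auto. apply (Hup (G b)); [exists b; auto| |auto].
    unfold G. rewrite Mk_St; auto.
Qed.

Lemma L_nonbot p x : L p = Some x -> x <> SBot -> exists b, stable b p /\ c b p = Some x.
Proof.
  intros Hp Hx. destruct (Mk_nonbot _ _ _ _ Hp Hx) as [[b Hs] Hv]. exists b.
  rewrite (valL_eq b) in Hv; auto.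
Qed.

End Lim.
From Stdlib Require Import List Arith Lia Classical ClassicalEpsilon FunctionalExtensionality Cantor Wellfounded Wf_nat Peano_dec.

Fixpoint enc (l : list nat) : nat :=
  match l with [] => 0 | a :: l => S (Cantor.to_nat (a, enc l)) end.
Fixpoint dec (f n : nat) : list nat :=
  match f with 0 => [] | S f =>
    match n with 0 => [] | S n => let p := Cantor.of_nat n in fst p :: dec f (snd p) end end.

Lemma dec_enc l : forall f, enc l <= f -> dec f (enc l) = l.
Proof.
  induction l as [|a l IH]; intros f Hf.
  - destruct f; reflexivity.
  - simpl in Hf. destruct f as [|f]; [lia|]. cbn [dec enc]. rewrite Cantor.cancel_of_to. cbn [fst snd].
    f_equal. apply IH. pose proof (Cantor.to_nat_non_decreasing a (enc l)). lia.
Qed.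

Definition enum (m : nat) : list nat := let c := fst (Cantor.of_nat m) in dec c c.

Lemma enum_inf u N : exists m, N <= m /\ enum m = u.
Proof.
  exists (Cantor.to_nat (enc u, N)). split.
  - pose proof (Cantor.to_nat_non_decreasing (enc u) N). lia.
  - unfold enum. rewrite Cantor.cancel_of_to. cbn [fst]. apply dec_enc. lia.
Qed.

Lemma min_nat (P : nat -> Prop) : (exists n, P n) -> exists n, P n /\ forall m, m < n -> ~ P m.
Proof.
  intros [n Hn]. apply NNPP. intro Hno.
  assert (forall k, ~ P k) as H; [|exact (H n Hn)].
  intro k. induction k as [k IH] using lt_wf_ind. intro Hk. apply Hno. exists k. split; auto.
Qed.

Section Main.
Context {F V : Type} {arity : F -> nat} {R : rule F V -> Prop}.
Hypothesis HR : left_linear_trs arity R.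
Notation term := (term F V).
Variables (t0 : term) (U : pset).
Hypothesis Ht0 : wf arity t0.
Hypothesis HU : forall u, U u -> redex_occ R t0 u.
Hypothesis Hnc : forall u v, U u -> U v -> ~ conflicting R t0 u v.

Definition choose_pos (D : pset) (n : nat) : list nat :=
  if excluded_middle_informative (D (enum n)) then enum n
  else match excluded_middle_informative (exists u, D u) with
       | left H => proj1_sig (constructive_indefinite_description _ H) | right _ => [] end.

Lemma choose_pos_in D n : (exists u, D u) -> D (choose_pos D n).
Proof.
  intro H. unfold choose_pos. destruct (excluded_middle_informative (D (enum n))); auto.
  destruct (excluded_middle_informative _) as [H'|H']; [|contradiction].
  exact (proj2_sig (constructive_indefinite_description _ H')).
Qed.

Lemma choose_pos_enum D n : D (enum n) -> choose_pos D n = enum n.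
Proof. intro H. unfold choose_pos. destruct (excluded_middle_informative _); tauto. Qed.

Definition good_rule (t : term) (D : pset) pi rho :=
  redex_at R t pi rho /\ forall pi2, pi2 <> [] -> D (pi ++ pi2) -> ~ pattern_pos rho pi2.

Definition choose_rule (t : term) D pi : rule F V :=
  match excluded_middle_informative (exists rho, good_rule t D pi rho) with
  | left H => proj1_sig (constructive_indefinite_description _ H)
  | right _ => Rule botterm botterm end.

Definition choose_sigma (t : term) pi (rho : rule F V) : V -> term :=
  match excluded_middle_informative (exists sigma, subterm t pi = subst sigma (lhs rho)) with
  | left H => proj1_sig (constructive_indefinite_description _ H)
  | right _ => fun _ => botterm end.

Definition step (n : nat) (s : term * pset) : term * pset :=
  let pi := choose_pos (snd s) n in
  let rho := choose_rule (fst s) (snd s) pi in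
  (replace (fst s) pi (subst (choose_sigma (fst s) pi rho) (rhs rho)), desc_step rho pi (snd s)).

Fixpoint st (n : nat) : term * pset := match n with 0 => (t0, U) | S n => step n (st n) end.

Definition tmN n := fst (st n).
Definition DN n := snd (st n).
Definition posN n := choose_pos (DN n) n.
Definition rlN n := choose_rule (tmN n) (DN n) (posN n).

Lemma Inv0 : Inv (R:=R) t0 U.
Proof.
  intros u Hu. destruct (HU u Hu) as [rho Hr]. exists rho. split; auto.
  intros pi Hpi Hv Hp. apply (Hnc u (u ++ pi) Hu Hv). split.
  - intro E. apply Hpi. rewrite <- (app_nil_r u) in E at 1. apply app_inv_head in E. auto.
  - left. exists pi, rho. auto.
Qed.

Lemma step_good n : wf arity (tmN n) -> Inv (R:=R) (tmN n) (DN n) -> (exists u, DN n u) ->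
  DN n (posN n) /\ rstep R (tmN n) (posN n) (rlN n) (tmN (S n)) /\
  wf arity (tmN (S n)) /\ Inv (R:=R) (tmN (S n)) (DN (S n)).
Proof.
  intros Hw HI Hne. pose proof (choose_pos_in (DN n) n Hne) as Hp. fold (posN n) in Hp.
  destruct (HI _ Hp) as [rho Hrho].
  assert (Hg : good_rule (tmN n) (DN n) (posN n) (rlN n)).
  { unfold rlN, choose_rule. destruct (excluded_middle_informative _) as [H|H].
    - exact (proj2_sig (constructive_indefinite_description _ H)).
    - exfalso. apply H. exists rho. exact Hrho. }
  destruct Hg as [[HRr Hex] _].
  set (sg := choose_sigma (tmN n) (posN n) (rlN n)).
  assert (Hs : subterm (tmN n) (posN n) = subst sg (lhs (rlN n))).
  { unfold sg, choose_sigma. destruct (excluded_middle_informative _) as [H|H]; [|contradiction].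
    exact (proj2_sig (constructive_indefinite_description _ H)). }
  assert (Et : tmN (S n) = replace (tmN n) (posN n) (subst sg (rhs (rlN n)))) by reflexivity.
  assert (ED : DN (S n) = desc_step (rlN n) (posN n) (DN n)) by reflexivity.
  split; [auto|split; [|split]].
  - split; auto. exists sg. auto.
  - rewrite Et. apply (step_wf HR); auto.
  - rewrite Et, ED. apply (step_inv HR); auto.
Qed.

Lemma inv_all n : (forall m, m < n -> exists u, DN m u) -> wf arity (tmN n) /\ Inv (R:=R) (tmN n) (DN n).
Proof.
  induction n as [|n IH]; intro H.
  - split; [exact Ht0|exact Inv0].
  - destruct IH as [Hw HI]. { intros m Hm. apply H. lia. }
    destruct (step_good n Hw HI (H n ltac:(lia))) as [_ [_ [? ?]]]. auto.
Qed.

Lemma sig_eq N (a b : {i : nat | i < N}) : proj1_sig a = proj1_sig b -> a = b.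
Proof. destruct a as [a Ha], b as [b Hb]. simpl. intros ->. f_equal. apply le_unique. Qed.


Lemma finite_case N : (forall u, ~ DN N u) -> (forall m, m < N -> exists u, DN m u) ->
  exists S : reduction F V, complete_development arity S R t0 U.
Proof.
  intros HN Hne.
  assert (HI : forall m, m <= N -> wf arity (tmN m) /\ Inv (R:=R) (tmN m) (DN m)).
  { intros m Hm. apply inv_all. intros k Hk. apply Hne. lia. }
  assert (Hg : forall m, m < N -> DN m (posN m) /\ rstep R (tmN m) (posN m) (rlN m) (tmN (S m))).
  { intros m Hm. destruct (HI m ltac:(lia)) as [Hw Hi].
    destruct (step_good m Hw Hi (Hne m Hm)) as [? [? _]]. auto. }
  exists {| idx := {i : nat | i < N}; ilt := fun a b => proj1_sig a < proj1_sig b;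
            tm := fun a => tmN (proj1_sig a); pos := fun a => posN (proj1_sig a);
            rl := fun a => rlN (proj1_sig a); fin := tmN N |}.
  assert (Hmin : forall a : {i : nat | i < N}, (forall k : {i : nat | i < N}, ~ proj1_sig k < proj1_sig a) -> proj1_sig a = 0).
  { intros [a Ha] H. simpl in *. destruct a; auto. exfalso. assert (H0 : 0 < N) by lia. apply (H (exist (fun i => i < N) 0 H0)). simpl. lia. }
  assert (Hsucc : forall a b : {i : nat | i < N}, proj1_sig a < proj1_sig b ->
     (forall k : {i : nat | i < N}, proj1_sig a < proj1_sig k -> b = k \/ proj1_sig b < proj1_sig k) ->
     proj1_sig b = S (proj1_sig a)).
  { intros [a Ha] [b Hb] Hab Hk. simpl in *. destruct (Nat.eq_dec b (S a)) as [->|Hn']; auto.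
    exfalso. assert (H0 : S a < N) by lia. assert (H1 : a < S a) by lia. destruct (Hk (exist (fun i => i < N) (S a) H0) H1) as [E|E].
    - injection E. lia.
    - simpl in E. lia. }
  assert (Hmax : forall a : {i : nat | i < N}, (forall k : {i : nat | i < N}, ~ proj1_sig a < proj1_sig k) -> S (proj1_sig a) = N).
  { intros [a Ha] H. simpl in *. destruct (Nat.eq_dec (S a) N); auto.
    exfalso. assert (H0 : S a < N) by lia. apply (H (exist (fun i => i < N) (S a) H0)). simpl. lia. }
  assert (Hlim : forall l : {i : nat | i < N}, is_limit {| idx := {i : nat | i < N}; ilt := fun a b => proj1_sig a < proj1_sig b;
            tm := fun a => tmN (proj1_sig a); pos := fun a => posN (proj1_sig a);
            rl := fun a => rlN (proj1_sig a); fin := tmN N |} l -> False).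
  { intros [l Hl] [Hnm Hns]. destruct l as [|l].
    - apply Hnm. intros [k Hk]. simpl. lia.
    - apply Hns. assert (H0 : l < N) by lia. exists (exist (fun i => i < N) l H0). split; simpl; [lia|].
      intros [k Hk] Hlk; simpl in *. destruct (Nat.eq_dec k (S l)) as [->|Hn'].
      + left. apply sig_eq. reflexivity.
      + right. simpl. lia. }
  assert (Hopen : open_red {| idx := {i : nat | i < N}; ilt := fun a b => proj1_sig a < proj1_sig b;
            tm := fun a => tmN (proj1_sig a); pos := fun a => posN (proj1_sig a);
            rl := fun a => rlN (proj1_sig a); fin := tmN N |} -> False).
  { intros [[[a Ha] _] Hnomax]. apply Hnomax. assert (H0 : N - 1 < N) by lia. exists (exist (fun i => i < N) (N - 1) H0).
    intros [k Hk]. simpl. lia. }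
  assert (Hemp : empty_red {| idx := {i : nat | i < N}; ilt := fun a b => proj1_sig a < proj1_sig b;
            tm := fun a => tmN (proj1_sig a); pos := fun a => posN (proj1_sig a);
            rl := fun a => rlN (proj1_sig a); fin := tmN N |} -> N = 0).
  { intro He. destruct (Nat.eq_dec N 0); auto. exfalso. assert (H0 : 0 < N) by lia. exact (He (exist (fun i => i < N) 0 H0)). }
  split.
  - refine (conj _ (conj _ (conj _ (conj _ (conj _ (conj _ (conj _ (conj _ _)))))))).
    + refine (conj _ (conj _ (conj _ _))).
      * intros a. simpl. lia.
      * intros a b c. simpl. lia.
      * intros a b. simpl. destruct (lt_eq_lt_dec (proj1_sig a) (proj1_sig b)) as [[H|H]|H]; auto.
        right; left. apply sig_eq. auto.
      * exact (wf_inverse_image _ _ lt (@proj1_sig _ _) lt_wf).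
    + intros [a Ha]. simpl. apply HI. lia.
    + apply HI. lia.
    + intros a Ha. simpl. rewrite (Hmin a Ha). reflexivity.
    + intros He. simpl. rewrite (Hemp He). reflexivity.
    + intros a b Hab. simpl. rewrite (Hsucc a b (proj1 Hab) (proj2 Hab)). apply Hg. destruct a; simpl; auto.
    + intros a Ha. simpl. replace (tmN N) with (tmN (S (proj1_sig a))) by (rewrite (Hmax a Ha); reflexivity). apply Hg. destruct a; simpl; auto.
    + intros l Hl. exfalso. exact (Hlim l Hl).
    + intros Ho. exfalso. exact (Hopen Ho).
  - exists (fun a => DN (proj1_sig a)), (DN N). split; [|split].
    + refine (conj _ (conj _ (conj _ (conj _ (conj _ _))))).
      * intros a Ha u. simpl. rewrite (Hmin a Ha). tauto.
      * intros He u. rewrite (Hemp He). tauto.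
      * intros a b Hab u. simpl. rewrite (Hsucc a b (proj1 Hab) (proj2 Hab)). tauto.
      * intros a Ha u. simpl. replace (DN N) with (DN (S (proj1_sig a))) by (rewrite (Hmax a Ha); reflexivity). tauto.
      * intros l Hl. exfalso. exact (Hlim l Hl).
      * intros Ho. exfalso. exact (Hopen Ho).
    + intros [a Ha]. simpl. apply Hg. auto.
    + exact HN.
Qed.

Lemma botterm_wf : wf arity (@botterm F V).
Proof.
  split.
  - simpl. congruence.
  - intros p i. split.
    + intro H. exfalso. destruct p; simpl in H; congruence.
    + intros [f [Hf _]]. destruct p; simpl in Hf; congruence.
Qed.

Lemma infinite_case : (forall n, exists u, DN n u) ->
  exists S : reduction F V, complete_development arity S R t0 U.
Proof.
  intros Hne.
  assert (HI : forall m, wf arity (tmN m) /\ Inv (R:=R) (tmN m) (DN m)).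
  { intros m. apply inv_all. intros k Hk. apply Hne. }
  assert (Hg : forall m, DN m (posN m) /\ rstep R (tmN m) (posN m) (rlN m) (tmN (S m))).
  { intros m. destruct (HI m) as [Hw Hi].
    destruct (step_good m Hw Hi (Hne m)) as [? [? _]]. auto. }
  set (c := fun n => replace (tmN n) (posN n) botterm).
  assert (Hc : forall n, wf arity (c n)).
  { intro n. unfold c. apply replace_wf; [apply HI| |apply botterm_wf].
    destruct (Hg n) as [_ [HRr [sg [Hs _]]]]. destruct (redex_root HR _ _ _ _ HRr Hs) as [f Hf]. congruence. }
  exists {| idx := nat; ilt := lt; tm := tmN; pos := posN; rl := rlN; fin := @L F V arity c |}.
  split.
  - refine (conj _ (conj _ (conj _ (conj _ (conj _ (conj _ (conj _ (conj _ _)))))))).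
    + refine (conj _ (conj _ (conj _ _))).
      * intros a. simpl. lia.
      * intros a b d. simpl. lia.
      * intros a b. simpl. destruct (lt_eq_lt_dec a b) as [[H|H]|H]; auto.
      * exact lt_wf.
    + intros a. apply HI.
    + apply L_wf. exact Hc.
    + intros a Ha. simpl. destruct a; auto. exfalso. apply (Ha 0). simpl. lia.
    + intros He. exfalso. exact (He 0).
    + intros a b [Hab Hk]. simpl in *. destruct (Hk (S a) ltac:(lia)) as [E|E].
      * subst. apply Hg.
      * lia.
    + intros a Ha. exfalso. apply (Ha (S a)). simpl. lia.
    + intros l [Hnm Hns]. exfalso. destruct l as [|l].
      * apply Hnm. intros k. simpl. lia.
      * apply Hns. exists l. split; simpl; [lia|]. intros k Hk. simpl in Hk.
        destruct (Nat.eq_dec k (S l)); [left; auto|right; simpl; lia].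
    + intros _. exists (@G F V arity c). split.
      * intros b _. exact (G_glb c Hc b).
      * exact (L_lub c Hc).
  - exists DN, (lim_desc {| idx := nat; ilt := lt; tm := tmN; pos := posN; rl := rlN; fin := @L F V arity c |} DN (fun _ => True) (@L F V arity c)).
    split; [|split].
    + refine (conj _ (conj _ (conj _ (conj _ (conj _ _))))).
      * intros a Ha u. simpl. destruct a; [tauto|]. exfalso. apply (Ha 0). simpl. lia.
      * intros He. exfalso. exact (He 0).
      * intros a b [Hab Hk] u. simpl in *. destruct (Hk (S a) ltac:(lia)) as [E|E].
        -- subst. tauto.
        -- lia.
      * intros a Ha. exfalso. apply (Ha (S a)). simpl. lia.
      * intros l [Hnm Hns]. exfalso. destruct l as [|l].
        -- apply Hnm. intros k. simpl. lia.
        -- apply Hns. exists l. split; simpl; [lia|]. intros k Hk. simpl in Hk.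
           destruct (Nat.eq_dec k (S l)); [left; auto|right; simpl; lia].
      * intros _ u. tauto.
    + intros a. apply Hg.
    + intros u [[x [Hx Hxb]] [b [_ Hb]]]. simpl in Hx.
      destruct (L_nonbot c u x Hx Hxb) as [b0 [Hst Hv]].
      destruct (enum_inf u (max b b0)) as [m [Hm Em]].
      assert (Dm : DN m u).
      { apply (Hb m I). simpl. destruct (Nat.eq_dec b m); [left; auto|right; lia]. }
      assert (Pm : posN m = u).
      { unfold posN. rewrite <- Em. apply choose_pos_enum. rewrite Em. auto. }
      assert (Cm : c m u = Some SBot).
      { unfold c. rewrite Pm. pose proof (replace_in (tmN m) botterm u []) as E.
        rewrite app_nil_r in E. rewrite E. reflexivity. }
      rewrite (stable_val c b0 u m Hst) in Cm; [|lia]. congruence.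
Qed.

Theorem main_dev : exists S : reduction F V, complete_development arity S R t0 U.
Proof.
  destruct (classic (exists n, forall u, ~ DN n u)) as [H|H].
  - destruct (min_nat _ H) as [N [HN Hmin]]. apply (finite_case N HN).
    intros m Hm. specialize (Hmin m Hm). apply not_all_not_ex. auto.
  - apply infinite_case. intro n. apply not_all_not_ex. intro H'. apply H. exists n. auto.
Qed.

End Main.

Theorem proposition5p17 (F V : Type) (arity : F -> nat) (R : rule F V -> Prop)
  (HR : left_linear_trs arity R)
  (t : term F V) (Ht : wf arity t)
  (U : pset)
  (HU : forall u, U u -> redex_occ R t u)
  (Hnc : forall u v, U u -> U v -> ~ conflicting R t u v) :
  exists S : reduction F V, complete_development arity S R t U.
Proof.
  exact (main_dev HR t U Ht HU Hnc).
Qed.
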